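(* Let $\langle X,\tau\rangle$ be a Hausdorff topological space and $S\subseteq X$ a subset such that both $S$ and $X\setminus S$ are dense in $X$. If the subspace $\langle S,\tau\upharpoonright S\rangle$ is homeomorphic to the Sorgenfrey line, then $\langle X,\tau\rangle$ is not a continuous open image of the Sorgenfrey line.
   Context: The Sorgenfrey line is $\mathbb R$ with topology generated by $\{[a,b):a,b\in\mathbb R\}$; ''continuous open image'' means image under a continuous open surjection. *)

(* Defs.v *)
From HB Require Import structures.
From mathcomp Require Import all_boot all_order all_algebra.
From mathcomp Require Import all_classical all_reals all_analysis.
Set Implicit Arguments. Unset Strict Implicit. Unset Printing Implicit Defensive.
Import Order.TTheory GRing.Theory Num.Theory.
Local Open Scope classical_set_scope.
Local Open Scope ring_scope.

Definition sorgenfrey_open {R : realType} (U : set R) : Prop :=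
  forall x, U x -> exists2 b : R, x < b & [set y | x <= y < b] `<=` U.

(* The subspace (S, tau|S) of a topological space X is homeomorphic to the
   Sorgenfrey line: there are mutually inverse bijections h : S -> R and
   g : R -> S (h given on X, only its values on S matter), both continuous
   for the subspace topology on S (whose opens are the U `&` S, U open in X)
   and the Sorgenfrey topology on R. *)
Definition subspace_homeomorphic_to_sorgenfrey {R : realType}
    (X : topologicalType) (S : set X) : Prop :=
  exists (h : X -> R) (g : R -> X),
    [/\ (forall r, S (g r)),
        (forall r, h (g r) = r),
        (forall x, S x -> g (h x) = x),
        (forall V : set R, sorgenfrey_open V ->
           exists U : set X, open U /\ S `&` (h @^-1` V) = S `&` U) &
        (forall U : set X, open U -> sorgenfrey_open (g @^-1` U))].

Definition continuous_open_image_of_sorgenfrey {R : realType}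
    (X : topologicalType) : Prop :=
  exists f : R -> X,
    [/\ (forall x : X, exists r, f r = x),
        (forall U : set X, open U -> sorgenfrey_open (f @^-1` U)) &
        (forall V : set R, sorgenfrey_open V -> open (f @` V))].

(* Main.v *)
Require Import Defs.
From HB Require Import structures.
From mathcomp Require Import all_boot all_order all_algebra.
From mathcomp Require Import all_classical all_reals all_analysis.
From mathcomp Require Import lra.
Import Order.TTheory GRing.Theory Num.Theory numFieldNormedType.Exports.
Local Open Scope classical_set_scope.
Local Open Scope ring_scope.

Lemma ballR (R : realType) (x e y : R) : ball x e y <-> `|x - y| < e.
Proof. by rewrite -ball_normE. Qed.

Lemma openR_ball (R : realType) (A : set R) x : open A -> A x ->
  exists2 e : R, 0 < e & forall y, `|x - y| < e -> A y.
Proof.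
move=> oA Ax; have : nbhs x A by apply: open_nbhs_nbhs.
move=> /nbhs_ballP[e e0 H]; exists e => // y xy; apply: H; exact/ballR.
Qed.

Lemma ball_openR (R : realType) (A : set R) :
  (forall x, A x -> exists2 e : R, 0 < e & forall y, `|x - y| < e -> A y) -> open A.
Proof.
move=> H; rewrite openE => x Ax; rewrite /interior.
apply/nbhs_ballP; have [e e0 He] := H x Ax; exists e => // y /ballR; exact: He.
Qed.

Lemma baire_interval (R : realType) (F : nat -> set R) :
  (forall x, exists i, F i x) ->
  exists i (p q : R), p < q /\ forall x y, p <= x -> x < y -> y <= q ->
    exists d, F i d /\ x < d < y.
Proof.
move=> cover; apply: contrapT => H.
have H' : forall i (p q : R), p < q -> exists x y, [/\ p <= x, x < y, y <= q &
    forall d, F i d -> ~ (x < d < y)].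
  move=> i p q pq; apply: contrapT => nH; apply: H; exists i, p, q; split => //.
  move=> x y px xy yq; apply: contrapT => nd; apply: nH; exists x, y; split => //.
  by move=> d Fd dxy; apply: nd; exists d.
pose O i := [set z : R | exists2 e : R, 0 < e & forall d, F i d -> e <= `|d - z|].
have oO : forall i, open (O i) /\ dense (O i).
  move=> i; split.
    apply: (@ball_openR R) => z [e e0 He]; exists (e / 2); first lra.
    move=> y zy; exists (e / 2); first lra.
    move=> d Fd; have := He d Fd.
    have := ler_distD y d z.
    rewrite (distrC z y) in zy; lra.
  move=> D [z Dz] oD; have [r r0 Hr] := @openR_ball R D z oD Dz.
  have [x [y [zx xy yz Hf]]] := H' i (z - r / 2) (z + r / 2) ltac:(lra).
  exists ((x + y) / 2); split.
    by apply: Hr; rewrite ltr_distlC; apply/andP; split; lra.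
  exists ((y - x) / 2); first lra.
  move=> d Fd; rewrite leNgt; apply/negP => h; apply: (Hf d Fd).
  by move: h; rewrite ltr_distlC => /andP[h1 h2]; apply/andP; split; lra.
have Bd := Baire oO.
have [z [_ Hz]] := Bd setT (ex_intro _ 0 I) openT.
have [i Fi] := cover z.
have [e e0 He] := Hz i I.
have := He z Fi; rewrite subrr normr0; lra.
Qed.

Section Core.
Variable R : realType.
Variables (T : set R) (phi : R -> R).
Hypothesis Tdense : forall a b : R, a < b -> exists t, a < t < b /\ T t.
Hypothesis Tcdense : forall a b : R, a < b -> exists t, a < t < b /\ ~ T t.
Hypothesis Tsurj : forall r, exists t, T t /\ phi t = r.
Hypothesis Tcont : forall {t}, T t -> forall e : R, 0 < e ->
  exists2 b, t < b & forall t', T t' -> t <= t' < b -> phi t <= phi t' < phi t + e.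
Hypothesis Topen : forall {t}, T t -> forall b, t < b -> exists2 e : R, 0 < e &
  forall r, phi t <= r < phi t + e -> exists t', [/\ T t', t <= t' < b & phi t' = r].
Hypothesis Tclosed : forall u r, (forall e b : R, 0 < e -> u < b ->
  exists t, [/\ T t, u <= t < b & r <= phi t < r + e]) -> T u /\ phi u = r.

Definition wit (d m w : R) :=
  [/\ T m, phi m = d,
     (forall t', T t' -> m <= t' < m + w -> d <= phi t') &
     (forall t', T t' -> m - w <= t' < m -> phi t' <> d)].

Lemma wit_mono d m w w' : 0 < w' <= w -> wit d m w -> wit d m w'.
Proof.
move=> /andP[w'0 w'w] [Tm pm H1 H2]; split => // t' Tt' /andP[h1 h2].
  by apply: H1 => //; apply/andP; split => //; lra.
by apply: H2 => //; apply/andP; split => //; lra.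
Qed.

Lemma witness d : exists m w, 0 < w /\ wit d m w.
Proof.
have [t0 [Tt0 pt0]] := Tsurj d.
have [s [/andP[s1 s2] nTs]] := Tcdense (t0 - 1) t0 ltac:(lra).
pose P := [set t | s <= t /\ T t /\ phi t = d].
have Pne : P !=set0 by exists t0; split => //; lra.
have Plb : has_lbound P by exists s => t [].
have hinf : has_inf P by [].
set m := inf P.
have sm : s <= m by apply: lb_le_inf => // t [].
have Pm : P m.
  have [Tm pm] : T m /\ phi m = d.
    apply: Tclosed => e b e0 mb.
    have bm0 : 0 < b - m by rewrite subr_gt0.
    have [t Pt tb] := inf_adherent bm0 hinf.
    have mt : m <= t by apply: ge_inf.
    case: Pt => st [Tt ptd]; exists t; split => //.
      apply/andP; split => //; lra.
    by rewrite ptd; apply/andP; split; lra.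
  by split.
case: Pm => _ [Tm pm].
have sltm : s < m.
  rewrite lt_neqAle sm andbT; apply/eqP => sm'.
  by apply: nTs; rewrite sm'.
have [b mb Hb] := Tcont Tm 1 ltr01.
pose w := Num.min (m - s) (b - m).
have w1 : w <= m - s by rewrite /w ge_min lexx.
have w2 : w <= b - m by rewrite /w ge_min lexx orbT.
have w0 : 0 < w by rewrite /w lt_min; apply/andP; split; lra.
exists m, w; split => //.
split => //.
  move=> t' Tt' /andP[h1 h2]; rewrite -pm.
  have tb : t' < b by lra.
  by have /andP[] := Hb t' Tt' (introT andP (conj h1 tb)).
move=> t' Tt' /andP[h1 h2] ptd.
have Pt' : P t' by split; [lra | split].
have := ge_inf Plb Pt'; rewrite -/m; lra.
Qed.

Definition Bs (n : nat) (k : int) := [set d | exists m,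
  wit d m (2 / (n.+1)%:R) /\ k%:~R / (n.+1)%:R <= m < k%:~R / (n.+1)%:R + 1 / (n.+1)%:R].

Lemma Bs_cover d : exists n k, Bs n k d.
Proof.
have [m [w [w0 Wm]]] := witness d.
pose n := Num.truncn (2 / w).
have N0 : (0:R) < (n.+1)%:R by rewrite ltr0n.
have h1 : 2 / w < (n.+1)%:R by apply: truncnS_gt.
have h2 : 2 / (n.+1)%:R < w.
  by rewrite ltr_pdivrMr //; move: h1; rewrite ltr_pdivrMr // mulrC.
have h3 : (0:R) < 2 / (n.+1)%:R by rewrite divr_gt0.
exists n, (Num.floor (m * (n.+1)%:R)); rewrite /Bs /=; exists m; split.
  by apply: wit_mono Wm; rewrite h3 ltW.
have /andP[f1 f2] := floor_itv (m * (n.+1)%:R).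
apply/andP; split; first by rewrite ler_pdivrMr.
by rewrite -mulrDl ltr_pdivlMr //; move: f2; rewrite intrD.
Qed.

Lemma core_false : False.
Proof.
pose F i := if @unpickle (nat * int)%type i is Some nk then Bs nk.1 nk.2 else set0.
have cover : forall x, exists i, F i x.
  move=> x; have [n [k Bx]] := Bs_cover x; exists (pickle (n,k)).
  by rewrite /F pickleK.
have [i [p [q [pq Hd]]]] := @baire_interval R F cover.
case Ei : (@unpickle (nat * int)%type i) => [[n k]|]; last first.
  have [d [Fd _]] := Hd p q (lexx p) pq (lexx q).
  by rewrite /F Ei in Fd.
have Hd' : forall x y, p <= x -> x < y -> y <= q -> exists d, Bs n k d /\ x < d < y.
  move=> x y h1 h2 h3; have [d [Fd dd]] := Hd x y h1 h2 h3; exists d; split => //.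
  by rewrite /F Ei in Fd.
clear Hd.
pose N : R := (n.+1)%:R.
pose a := k%:~R / N.
pose io := 1 / N.
have N0 : 0 < N by rewrite ltr0n.
have i0 : 0 < io by rewrite divr_gt0.
have wE : 2 / N = io + io by rewrite /io -mulrDl.
have [tau Htau] : exists tau : R -> R, forall d, Bs n k d ->
    wit d (tau d) (io + io) /\ a <= tau d < a + io.
  have H : forall d, exists m, Bs n k d -> wit d m (io + io) /\ a <= m < a + io.
    move=> d; case: (pselect (Bs n k d)) => [[m [W1 W2]]|nB].
      by exists m => _; rewrite -wE; split.
    by exists 0.
  have [f Hf] := choice H; by exists f.
have Claim1 : forall d t, Bs n k d -> T t -> tau d <= t < a + io -> d <= phi t.
  move=> d t Bd Tt /andP[h1 h2].
  have [[_ _ W3 _] /andP[h3 h4]] := Htau d Bd.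
  by apply: W3 => //; apply/andP; split => //; lra.
have Claim1' : forall d d', Bs n k d -> Bs n k d' -> tau d <= tau d' -> d <= d'.
  move=> d d' Bd Bd' h.
  have [[Td' pd' _ _] /andP[h3 h4]] := Htau d' Bd'.
  rewrite -pd'; apply: Claim1 => //; apply/andP; split => //.
have [d0 [B0 /andP[pd0 d0q]]] := Hd' p q (lexx p) pq (lexx q).
have [d1 [B1 /andP[d01 d1q]]] := Hd' d0 q (ltW pd0) d0q (lexx q).
have [[Td0 pd0' _ _] /andP[a0 a0']] := Htau d0 B0.
have [[Td1 pd1' _ _] /andP[a1 a1']] := Htau d1 B1.
have t01 : tau d0 < tau d1.
  rewrite ltNge; apply/negP => h; have := Claim1' d1 d0 B1 B0 h; lra.
have [b0 tb0 Hb0] := Tcont Td0 (q - d0) ltac:(lra).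
pose e' := Num.min b0 (tau d1).
have e'1 : e' <= b0 by rewrite /e' ge_min lexx.
have e'2 : e' <= tau d1 by rewrite /e' ge_min lexx orbT.
have e'3 : tau d0 < e' by rewrite /e' lt_min; apply/andP; split.
have [u [/andP[u1 u2] nTu]] := Tcdense _ _ e'3.
have Key : forall t, T t -> tau d0 <= t < e' -> forall eta, 0 < eta ->
    exists d, Bs n k d /\ t < tau d < t + eta.
  move=> t Tt /andP[h1 h2] eta eta0.
  have /andP[pt1 pt2] : d0 <= phi t < q.
    have tb : t < b0 by lra.
    have /andP[] := Hb0 t Tt (introT andP (conj h1 tb)); rewrite pd0'.
    move=> ? ?; apply/andP; split; lra.
  have [eps eps0 Hop] := Topen Tt (t + eta) ltac:(lra).
  pose y := Num.min (phi t + eps) q.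
  have y1 : y <= phi t + eps by rewrite /y ge_min lexx.
  have y2 : y <= q by rewrite /y ge_min lexx orbT.
  have y3 : phi t < y by rewrite /y lt_min; apply/andP; split; lra.
  have [d [Bd /andP[dd1 dd2]]] := Hd' (phi t) y ltac:(lra) y3 y2.
  have [t' [Tt' /andP[t'1 t'2] pt']] := Hop d ltac:(apply/andP; split; lra).
  have [[Td pd W3 W4] /andP[ad1 ad2]] := Htau d Bd.
  have tdt : t < tau d.
    rewrite ltNge; apply/negP => h.
    have := Claim1 d t Bd Tt ltac:(apply/andP; split => //; lra); lra.
  have tdt' : tau d <= t'.
    rewrite leNgt; apply/negP => h.
    by apply: (W4 t' Tt') => //; apply/andP; split => //; lra.
  by exists d; split => //; apply/andP; split; lra.
have Accum : forall eta, 0 < eta -> exists d, Bs n k d /\ u < tau d < u + eta.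
  move=> eta eta0.
  pose z := Num.min (u + eta / 2) e'.
  have z1 : z <= u + eta / 2 by rewrite /z ge_min lexx.
  have z2 : z <= e' by rewrite /z ge_min lexx orbT.
  have z3 : u < z by rewrite /z lt_min; apply/andP; split; lra.
  have [t [/andP[t1 t2] Tt]] := Tdense _ _ z3.
  have [d [Bd /andP[h1 h2]]] := Key t Tt ltac:(apply/andP; split; lra) (eta / 2) ltac:(lra).
  by exists d; split => //; apply/andP; split; lra.
pose Ru := [set d | Bs n k d /\ u < tau d].
have Ru1 : Ru d1 by split => //; lra.
have Rlb : has_lbound Ru.
  exists d0 => d [Bd h]; apply: Claim1' => //; lra.
have Rinf : has_inf Ru by split => //; exists d1.
have [Tu _] : T u /\ phi u = inf Ru.
  apply: Tclosed => e b e0 ub.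
  have [ds [Bds uds] dse] := inf_adherent e0 Rinf.
  pose eta := Num.min b (tau ds) - u.
  have eta0 : 0 < eta by rewrite /eta subr_gt0 lt_min; apply/andP; split.
  have et1 : eta <= b - u by rewrite /eta lerD2r ge_min lexx.
  have et2 : eta <= tau ds - u by rewrite /eta lerD2r ge_min lexx orbT.
  have [d [Bd /andP[h1 h2]]] := Accum eta eta0.
  have rd : inf Ru <= d by apply: ge_inf => //; split => //.
  have dds : d <= ds by apply: Claim1' => //; lra.
  have [[Td pd _ _] _] := Htau d Bd.
  exists (tau d); split => //.
    by apply/andP; split; lra.
  by rewrite pd; apply/andP; split; lra.
exact: nTu.
Qed.
End Core.

Lemma sorg_itv {R : realType} (a b : R) : sorgenfrey_open [set y | a <= y < b].
Proof. by move=> x /andP[h1 h2]; exists b => // y /andP[h3 h4]; apply/andP; split => //; apply: le_trans h3. Qed.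

Lemma sorg_oitv {R : realType} (a b : R) : sorgenfrey_open [set y | a < y < b].
Proof. by move=> x /andP[h1 h2]; exists b => // y /andP[h3 h4]; apply/andP; split => //; apply: lt_le_trans h3. Qed.

Theorem mainTheorem12 (R : realType) (X : topologicalType) (S : set X) :
  hausdorff_space X -> dense S -> dense (~` S) ->
  @subspace_homeomorphic_to_sorgenfrey R X S ->
  ~ @continuous_open_image_of_sorgenfrey R X.
Proof.
move=> hX dS dSc [h [g [Sg hg gh hcont gcont]]] [f [fsurj fcont fopen]].
pose T := fun t => S (f t).
pose phi := fun t => h (f t).
have dens : forall (A : set X), dense A -> forall a b : R, a < b -> exists t, a < t < b /\ A (f t).
  move=> A dA a b ab.
  have oV := fopen _ (sorg_oitv a b).
  have ne : f @` [set y | a < y < b] !=set0.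
    by exists (f ((a + b) / 2)); exists ((a + b) / 2) => //; apply/andP; split; lra.
  have [x [[t tV <-] Ax]] := dA _ ne oV.
  by exists t.
apply: (@core_false R T phi).
- exact: dens dS.
- exact: dens dSc.
- move=> r; have [t ft] := fsurj (g r); exists t; split.
    by rewrite /T ft.
  by rewrite /phi ft hg.
- move=> t Tt e e0.
  have [U [oU HU]] := hcont _ (sorg_itv (phi t) (phi t + e)).
  have Uft : U (f t).
    have : (S `&` (h @^-1` [set y | phi t <= y < phi t + e])) (f t).
      by split => //=; rewrite /phi; apply/andP; split; lra.
    by rewrite HU => -[].
  have [b tb Hb] := fcont U oU t Uft.
  exists b => // t' Tt' h1.
  have : (S `&` U) (f t') by split => //; apply: Hb.
  by rewrite -HU => -[_].
- move=> t Tt b tb.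
  have oW := fopen _ (sorg_itv t b).
  have [e e0 He] : exists2 e : R, 0 < e & [set y | phi t <= y < phi t + e] `<=`
      (g @^-1` (f @` [set y | t <= y < b])).
    have [b' tb' Hb'] := gcont _ oW (phi t) ltac:(by rewrite /= /phi gh //; exists t => //; apply/andP; split).
    by exists (b' - phi t); [lra | move=> y /andP[h1 h2]; apply: Hb'; apply/andP; split; lra].
  exists e => // r hr.
  have [t' ht' ft'] := He r hr.
  exists t'; split => //.
  + by rewrite /T ft'.
  + by rewrite /phi ft' hg.
- move=> u r H.
  have fug : f u = g r.
    apply: hX => A B; rewrite !nbhsE => -[U [oU Uu] UA] [V [oV Vr] VB].
    have [b1 ub1 Hb1] := fcont U oU u Uu.
    have [b2 rb2 Hb2] := gcont V oV r Vr.
    have [t [Tt /andP[t1 t2] /andP[p1 p2]]] := H (b2 - r) b1 ltac:(lra) ub1.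
    exists (f t); split.
      by apply: UA; apply: Hb1; apply/andP; split.
    apply: VB; have := Hb2 (phi t) ltac:(apply/andP; split; lra).
    by rewrite /= /phi gh.
  by split; rewrite /T /phi fug ?hg.
Qed.
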